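(* Let $\Sigma$ be a self-converse oriented graph on $n$ vertices such that $\det W(\Sigma)\neq 0$, and let $p$ be an odd prime. Suppose that $\mathrm{rank}_p\,W(\Sigma)=n-1$, where $\mathrm{rank}_p$ denotes rank over $\mathbb{F}_p$. Then $\ker W(\Sigma)^{\mathrm T}\subset\mathbb{F}_p^n$ is anisotropic; that is, if $v\in\mathbb{F}_p^n$, $v\neq 0$, and $W(\Sigma)^{\mathrm T}v=0$ over $\mathbb{F}_p$, then $v^{\mathrm T}v\neq 0$ in $\mathbb{F}_p$.
   Context: An oriented graph $\Sigma$ on vertex set $\{v_1,\dots,v_n\}$ is a simple graph in which every edge has been given a direction. Its skew adjacency matrix $S=S(\Sigma)=(S_{ij})$ is the $n\times n$ matrix with $S_{ij}=1$ if $(v_i,v_j)$ is a (directed) edge, $S_{ij}=-1$ if $(v_j,v_i)$ is an edge, and $S_{ij}=0$ otherwise. The walk-matrix of $\Sigma$ is $W(\Sigma)=[e,Se,\ldots,S^{n-1}e]$, where $e$ is the all-ones vector. $\Sigma$ is self-converse if there is a permutation matrix $P$ with $P^{\mathrm T}SP=S^{\mathrm T}=-S$ (equivalently, $\Sigma$ is isomorphic to the oriented graph obtained by reversing all its edges). A subspace $U\subset\mathbb{F}_p^n$ is anisotropic if $u^{\mathrm T}u\neq0$ for every nonzero $u\in U$. *)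

(* Defs.v *)
From HB Require Import structures.
From mathcomp Require Import all_boot all_order all_fingroup all_algebra.
Set Implicit Arguments. Unset Strict Implicit. Unset Printing Implicit Defensive.
Import Order.TTheory GRing.Theory Num.Theory.
Local Open Scope ring_scope.

Definition oriented_graph (n : nat) (E : rel 'I_n) : Prop :=
  (forall i, ~~ E i i) /\ (forall i j, E i j -> ~~ E j i).

Definition skew_adj (n : nat) (E : rel 'I_n) : 'M[int]_n :=
  \matrix_(i, j) ((E i j)%:Z - (E j i)%:Z).

Definition walk_matrix (n : nat) (E : rel 'I_n) : 'M[int]_n :=
  \matrix_(i, j) (((skew_adj E ^+ j *m (const_mx 1 : 'cV[int]_n)) i ord0)).

(* Self-converse: P^T S P = S^T = -S for some permutation matrix P. *)
Definition self_converse (n : nat) (E : rel 'I_n) : Prop :=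
  exists s : 'S_n,
    (perm_mx s)^T *m skew_adj E *m perm_mx s = - skew_adj E.

Definition mod_p (p m n : nat) (A : 'M[int]_(m, n)) : 'M['F_p]_(m, n) :=
  map_mx (fun z : int => z%:~R) A.

(* Main.v *)
Require Import Defs.
From HB Require Import structures.
From mathcomp Require Import all_boot all_order all_fingroup all_algebra.
From mathcomp Require Import zify.
Set Implicit Arguments. Unset Strict Implicit. Unset Printing Implicit Defensive.
Import Order.TTheory GRing.Theory Num.Theory.
Local Open Scope ring_scope.

Section Core.
Variables (F : fieldType) (n : nat).
Variables (T G : 'M[F]_n.+1) (e : 'rV[F]_n.+1).
Hypotheses (h2 : (2%:R : F) != 0) (hTt : T^T = - T) (hGt : G^T = G)
  (hGG : G *m G = 1%:M) (hTG : T *m G = - (G *m T)) (heG : e *m G = e).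

Definition kw k := e *m T ^+ k.
Definition KR := \matrix_(k < n.+1) kw k.

Lemma kwS k : kw k.+1 = kw k *m T.
Proof. by rewrite /kw exprSr -mulmxE mulmxA. Qed.

Lemma kwG k : kw k *m G = (-1) ^+ k *: kw k.
Proof.
elim: k => [|k IH]; first by rewrite /kw expr0 mulmx1 heG scale1r.
by rewrite kwS -mulmxA hTG mulmxN mulmxA IH -scalemxAl exprS mulN1r scaleNr -kwS.
Qed.

Lemma CH_kw : (kw n.+1 <= KR)%MS.
Proof.
have CH := Cayley_Hamilton T.
rewrite -(coefK (char_poly T)) poly_def size_char_poly in CH.
rewrite rmorph_sum /= in CH.
have CH2 : \sum_(i < n.+2) (char_poly T)`_i *: T ^+ i = 0.
  rewrite -[RHS]CH; apply: eq_bigr => i _.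
  by rewrite linearZ /= rmorphXn /= horner_mx_X.
have : e *m (\sum_(i < n.+2) (char_poly T)`_i *: T ^+ i) = 0 by rewrite CH2 mulmx0.
rewrite mulmx_sumr big_ord_recr /=.
have -> : (char_poly T)`_n.+1 = 1.
  by have := char_poly_monic T; rewrite monicE lead_coefE size_char_poly => /eqP.
rewrite scale1r => /eqP; rewrite addrC addr_eq0 => /eqP.
rewrite -/(kw n.+1) => ->.
rewrite (eqmx_opp _); apply: summx_sub => i _.
rewrite -scalemxAr scalemx_sub //.
have -> : e *m T ^+ i = row i KR by rewrite rowK.
exact: row_sub.
Qed.

Lemma kw_sub k : (k < n.+1)%N -> (kw k <= KR)%MS.
Proof. move=> hk; have -> : kw k = row (Ordinal hk) KR by rewrite rowK.
 exact: row_sub. Qed.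

Lemma KRT : (KR *m T <= KR)%MS.
Proof.
apply/row_subP => i; rewrite row_mul rowK -kwS.
case: (ltnP i.+1 n.+1) => hi; first exact: kw_sub.
have -> : i.+1 = n.+1 by apply/eqP; rewrite eqn_leq hi ltn_ord.
exact: CH_kw.
Qed.

Lemma KRG : (KR *m G <= KR)%MS.
Proof. by apply/row_subP => i; rewrite row_mul rowK kwG scalemx_sub // kw_sub. Qed.

Definition Dp := \matrix_(k < n.+1) (if odd k then 0 else kw k).
Definition Dm := \matrix_(k < n.+1) (if odd k then kw k else 0).

Lemma DpG : Dp *m G = Dp.
Proof.
apply/row_matrixP => i; rewrite row_mul !rowK.
by case: ifP => h; rewrite ?mul0mx // kwG -signr_odd h expr0 scale1r.
Qed.

Lemma DmG : Dm *m G = - Dm.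
Proof.
apply/row_matrixP => i; rewrite row_mul linearN /= !rowK.
by case: ifP => h; rewrite ?mul0mx ?oppr0 // kwG -signr_odd h expr1 scaleN1r.
Qed.

Lemma KR_split : KR = Dp + Dm.
Proof.
apply/row_matrixP => i; rewrite linearD /= !rowK.
by case: ifP => _; rewrite ?add0r ?addr0.
Qed.

Lemma Dp_sub : (Dp <= KR)%MS.
Proof. by apply/row_subP => i; rewrite rowK; case: ifP; rewrite ?sub0mx ?kw_sub. Qed.

Lemma Dm_sub : (Dm <= KR)%MS.
Proof. by apply/row_subP => i; rewrite rowK; case: ifP; rewrite ?sub0mx ?kw_sub. Qed.

Lemma Dm_le : (Dm <= Dp *m T)%MS.
Proof.
apply/row_subP => i; rewrite rowK; case: ifP => hodd; last exact: sub0mx.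
have hi : (i.-1 < n.+1)%N by apply: leq_ltn_trans (leq_pred _) (ltn_ord i).
have i0 : (0 < i)%N by case: (val i) hodd.
have -> : kw i = row (Ordinal hi) (Dp *m T).
  rewrite row_mul rowK /=.
  have ho : odd i.-1 = false by move: hodd i0; case: (nat_of_ord i) => //= k /negbTE.
  by rewrite ho -kwS prednK.
exact: row_sub.
Qed.

Lemma Dp_le : (Dp <= e + Dm *m T)%MS.
Proof.
apply/row_subP => i; rewrite rowK; case: ifP => hodd; first exact: sub0mx.
case hi0 : (nat_of_ord i) => [|k].
  by rewrite /kw expr0 mulmx1 addsmxSl.
have hk : (k < n.+1)%N by apply: ltn_trans (ltn_ord i); rewrite hi0.
apply: submx_trans (addsmxSr _ _).
have -> : kw k.+1 = row (Ordinal hk) (Dm *m T).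
  by move: hodd; rewrite hi0 /= => /negbFE ho; rewrite row_mul rowK /= ho -kwS.
exact: row_sub.
Qed.

Lemma fix_anti m1 m2 (A : 'M_(m1, n.+1)) (B : 'M_(m2, n.+1)) (y : 'rV_n.+1) :
  A *m G = A -> B *m G = - B -> (y <= A)%MS -> (y <= B)%MS -> y = 0.
Proof.
move=> hA hB /submxP[D1 ->] /submxP[D2 hy].
have h1 : D1 *m A *m G = D1 *m A by rewrite -mulmxA hA.
have h3 : D1 *m A *m G = - (D1 *m A) by rewrite hy -mulmxA hB mulmxN.
have : (2%:R : F) *: (D1 *m A) = 0.
  by rewrite scaler_nat mulr2n -{1}h1 h3 addNr.
by move/eqP; rewrite scaler_eq0 (negPf h2) /= => /eqP.
Qed.

Lemma cap_rank m1 m2 (A : 'M_(m1, n.+1)) (B : 'M_(m2, n.+1)) :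
  A *m G = A -> B *m G = - B -> \rank (A + B)%MS = (\rank A + \rank B)%N.
Proof.
move=> hA hB; rewrite -mxrank_sum_cap.
suff -> : (A :&: B)%MS = 0 by rewrite mxrank0 addn0.
apply/row_matrixP => i; rewrite row0.
apply: (fix_anti hA hB).
  exact: submx_trans (row_sub _ _) (capmxSl _ _).
exact: submx_trans (row_sub _ _) (capmxSr _ _).
Qed.

Lemma pG_fix : (1%:M + G) *m G = 1%:M + G.
Proof. by rewrite mulmxDl mul1mx hGG addrC. Qed.

Lemma mG_anti : (1%:M - G) *m G = - (1%:M - G).
Proof. by rewrite mulmxBl mul1mx hGG opprB. Qed.

Lemma sum_pm : (n.+1 <= \rank (1%:M + G)%R + \rank (1%:M - G)%R)%N.
Proof.
apply: leq_trans (mxrank_adds_leqif _ _).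
rewrite -{1}(@mxrank1 F n.+1) mxrankS //.

have e1 : (1%:M : 'M[F]_n.+1) = (2%:R : F)^-1 *: ((1%:M + G) + (1%:M - G)).
  by rewrite addrCA addrK -mulr2n -scaler_nat scalerA mulVf // scale1r.
rewrite {1}e1; apply: scalemx_sub; exact: addmx_sub_adds.
Qed.


Hypothesis hR : \rank KR = n.
Hypotheses (hdp : (2 * \rank (1%:M + G)%R <= n.+2)%N)
  (hdm : (2 * \rank (1%:M - G)%R <= n.+1)%N).

Lemma rank_split : (\rank Dp + \rank Dm)%N = n.
Proof.
rewrite -(cap_rank DpG DmG); apply/eqP; rewrite -[X in _ == X]hR eqn_leq !mxrankS //.
  by rewrite {1}KR_split addmx_sub_adds.
by rewrite addsmx_sub Dp_sub Dm_sub.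
Qed.

Theorem core (vr : 'rV[F]_n.+1) : vr != 0 -> vr *m KR^T = 0 -> vr *m vr^T != 0.
Proof.
move=> vr0 hv.
have perp : forall m (X : 'M_(m, n.+1)), (X <= KR)%MS -> vr *m X^T = 0.
  by move=> m X /submxP[D ->]; rewrite trmx_mul mulmxA hv mul0mx.
have rK : \rank (kermx KR^T) = 1%N by rewrite mxrank_ker mxrank_tr hR subSnn.
have vK : (vr <= kermx KR^T)%MS by apply/sub_kermxP.
have kerscal : forall y : 'rV_n.+1, y *m KR^T = 0 -> exists a, y = a *: vr.
  move=> y /sub_kermxP hy; apply/sub_rVP; apply: submx_trans hy _.
  by rewrite -(eq_leqif (mxrank_leqif_sup vK)) rK rank_rV vr0.
have [mu hmu] : exists mu, vr *m T = mu *: vr.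
  apply: kerscal; rewrite -mulmxA -[T]trmxK -trmx_mul hTt.
  by rewrite mulmxN linearN /= mulmxN perp ?oppr0 // KRT.
have [la hla] : exists la, vr *m G = la *: vr.
  by apply: kerscal; rewrite -mulmxA -[G]hGt -trmx_mul perp // KRG.
have la0 : la != 0.
  apply: contraNneq vr0 => la0.
  by rewrite -[vr]mulmx1 -hGG mulmxA hla la0 scale0r mul0mx.
have vT : vr *m T = 0.
  have : (2%:R * (la * mu)) *: vr = 0.
    have e1 : vr *m T *m G = (la * mu) *: vr.
      by rewrite hmu -scalemxAl hla scalerA mulrC.
    have e2 : vr *m G *m T = (la * mu) *: vr.
      by rewrite hla -scalemxAl hmu scalerA.
    have : vr *m T *m G = - (vr *m G *m T) by rewrite -!mulmxA hTG mulmxN.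
    rewrite e1 e2 => /eqP; rewrite -addr_eq0 -scalerDl => /eqP.
    by rewrite mulr_natl mulr2n.
  move/eqP; rewrite scaler_eq0 (negPf vr0) orbF !mulf_eq0 (negPf h2) (negPf la0) /=.
  by move=> /eqP mu0; rewrite hmu mu0 scale0r.
apply/negP => /eqP vv.
have rKv : \rank (kermx vr^T) = n by rewrite mxrank_ker mxrank_tr rank_rV vr0 subn1.
have KRv : (KR <= kermx vr^T)%MS.
  by apply/sub_kermxP; rewrite -[KR]trmxK -trmx_mul hv trmx0.
have vKR : (vr <= KR)%MS.
  apply: submx_trans (_ : (vr <= kermx vr^T)%MS) _; first exact/sub_kermxP.
  by rewrite -(eq_leqif (mxrank_leqif_sup KRv)) rKv hR.
have : (vr <= Dp)%MS || (vr <= Dm)%MS.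
  have : (vr <= Dp + Dm)%MS.
    by apply: submx_trans vKR _; rewrite KR_split addmx_sub_adds.
  case/sub_addsmxP => u hu.
  set yp := u.1 *m Dp in hu; set ym := u.2 *m Dm in hu.
  have ypG : yp *m G = yp by rewrite -mulmxA DpG.
  have ymG : ym *m G = - ym by rewrite -mulmxA DmG mulmxN.
  have hz : (1 - la) *: yp = (1 + la) *: ym.
    move: hla; rewrite hu mulmxDl ypG ymG scalerDr => h.
    rewrite scalerBl scalerDl !scale1r.
    rewrite -{1}(addrNK ym yp) h.
    by rewrite (addrC (la *: yp)) -!addrA (addrC (la *: yp)) addrNK addrC.
  have z0 : (1 - la) *: yp = 0.
    apply: (fix_anti DpG DmG).
      by rewrite scalemx_sub // submxMl.
    by rewrite hz scalemx_sub // submxMl.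
  have z1 : (1 + la) *: ym = 0 by rewrite -hz.
  case: (eqVneq la 1) => hl.
    move: z1; rewrite hl => /eqP; rewrite scaler_eq0 (negPf h2) /= => /eqP ym0.
    by rewrite hu ym0 addr0 submxMl.
  move: z0 => /eqP; rewrite scaler_eq0 subr_eq0 eq_sym (negPf hl) /= => /eqP yp0.
  by rewrite hu yp0 add0r submxMl orbT.
have hsum := sum_pm.
have hsplit := rank_split.
have kerT : forall m (X : 'M_(m, n.+1)), (vr <= X)%MS ->
    (\rank (X *m T) + 1 <= \rank X)%N.
  move=> m X vX; rewrite -(mxrank_mul_ker X T) leq_add2l.
  have : (vr <= X :&: kermx T)%MS by rewrite sub_capmx vX; apply/sub_kermxP.
  by move/mxrankS; rewrite rank_rV vr0.
case/orP => hvD.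
  have vG : vr *m G = vr by move/submxP: hvD => [D ->]; rewrite -mulmxA DpG.
  have h1 := kerT _ _ hvD.
  have h2' : (\rank Dm <= \rank (Dp *m T))%N by apply: mxrankS Dm_le.
  have h3 : (\rank Dp + \rank (1%:M - G)%R <= n)%N.
    rewrite -(cap_rank DpG mG_anti) -[X in (_ <= X)%N]rKv mxrankS // addsmx_sub; apply/andP; split.
      by apply/sub_kermxP; rewrite -[Dp]trmxK -trmx_mul perp ?trmx0 // Dp_sub.
    apply/sub_kermxP; rewrite mulmxBl mul1mx -[G]hGt -trmx_mul vG.
    by rewrite subrr.
  lia.
have vG : vr *m G = - vr by move/submxP: hvD => [D ->]; rewrite -mulmxA DmG mulmxN.
have h1 := kerT _ _ hvD.
have h2' : (\rank Dp <= 1 + \rank (Dm *m T))%N.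
  apply: leq_trans (mxrankS Dp_le) _.
  apply: leq_trans (mxrank_adds_leqif _ _) _.
  by apply: leq_add; [exact: rank_leq_row | exact: leqnn].
have h3 : (\rank Dm + \rank (1%:M + G)%R <= n)%N.
  rewrite addnC -(cap_rank pG_fix DmG) -[X in (_ <= X)%N]rKv mxrankS // addsmx_sub; apply/andP; split; last first.
    by apply/sub_kermxP; rewrite -[Dm]trmxK -trmx_mul perp ?trmx0 // Dm_sub.
  apply/sub_kermxP; rewrite mulmxDl mul1mx -[G]hGt -trmx_mul vG.
  by rewrite linearN /= addrN.
lia.
Qed.

End Core.

Lemma unit_facts (F : fieldType) n (T G : 'M[F]_n.+1) (e : 'rV_n.+1) :
  T *m G = - (G *m T) -> e *m G = e -> KR T e \in unitmx ->
  [/\ G *m G = 1%:M, (2 * \rank (1%:M + G)%R <= n.+2)%N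
     & (2 * \rank (1%:M - G)%R <= n.+1)%N].
Proof.
move=> hTG heG hU.
have kG := kwG hTG heG.
have hfull : row_full (KR T e) by rewrite row_full_unit.
split.
- have h : KR T e *m (G *m G) = KR T e.
    apply/row_matrixP => k; rewrite row_mul rowK mulmxA kG -scalemxAl kG scalerA.
    by rewrite -exprMn mulrNN mul1r expr1n scale1r.
  by rewrite -[G *m G]mul1mx -(mulVmx hU) -mulmxA h mulVmx.
- have := eqmxMfull (1%:M + G) hfull; move/eqmxP/eqmx_rank <-.
  have : (KR T e *m (1%:M + G) <= \matrix_(i < n.+2./2) kw T e (2 * i))%MS.
    apply/row_subP => k; rewrite row_mul rowK mulmxDr mulmx1 kG.
    case ok : (odd k).
      by rewrite -signr_odd ok expr1 scaleN1r subrr sub0mx.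
    have hk : (k./2 < n.+2./2)%N by move: (ltn_ord k) ok; lia.
    rewrite -signr_odd ok expr0 scale1r -[X in X + X]scale1r -scalerDl scalemx_sub //.
    have -> : kw T e k = row (Ordinal hk) (\matrix_(i < n.+2./2) kw T e (2 * i)).
      by rewrite rowK /=; congr (kw T e _); move: ok; lia.
    exact: row_sub.
  move/mxrankS => h; apply: leq_trans (leq_mul (leqnn 2) h) _.
  by apply: leq_trans (leq_mul (leqnn 2) (rank_leq_row _)) _; lia.
- have := eqmxMfull (1%:M - G) hfull; move/eqmxP/eqmx_rank <-.
  have : (KR T e *m (1%:M - G) <= \matrix_(i < n.+1./2) kw T e (2 * i + 1))%MS.
    apply/row_subP => k; rewrite row_mul rowK mulmxBr mulmx1 kG.
    case ok : (odd k); last first.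
      by rewrite -signr_odd ok expr0 scale1r subrr sub0mx.
    have hk : (k./2 < n.+1./2)%N by move: (ltn_ord k) ok; lia.
    rewrite -signr_odd ok expr1 scaleN1r opprK -[X in X + X]scale1r -scalerDl scalemx_sub //.
    have -> : kw T e k = row (Ordinal hk) (\matrix_(i < n.+1./2) kw T e (2 * i + 1)).
      by rewrite rowK /=; congr (kw T e _); move: ok; lia.
    exact: row_sub.
  move/mxrankS => h; apply: leq_trans (leq_mul (leqnn 2) h) _.
  by apply: leq_trans (leq_mul (leqnn 2) (rank_leq_row _)) _; lia.
Qed.
Lemma rank_int_le (F1 F2 : fieldType) m n (A : 'M[int]_(m, n)) :
  (forall z : int, (z%:~R : F2) = 0 -> z = 0) ->
  (\rank (map_mx (fun z : int => z%:~R : F1) A) <=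
   \rank (map_mx (fun z : int => z%:~R : F2) A))%N.
Proof.
move=> inj2.
set A1 := map_mx _ A; set A2 := map_mx _ A.
pose f := maxrankfun A1.
have free1 : row_free (rowsub f A1) := maxrowsub_free A1.
have full1 : row_full (rowsub f A1)^T by rewrite /row_full mxrank_tr.
pose g := fullrankfun full1.
have u1 : rowsub g (rowsub f A1)^T \in unitmx := fullrowsub_unit full1.
pose C := rowsub g (rowsub f A)^T.
have e1 : rowsub g (rowsub f A1)^T = map_mx (fun z : int => z%:~R : F1) C.
  by rewrite /C map_mxsub -map_trmx map_mxsub.
have dC : \det C != 0.
  move: u1; rewrite e1 unitmxE det_map_mx unitfE.
  by apply: contraNneq => ->; rewrite rmorph0.
have u2 : map_mx (fun z : int => z%:~R : F2) C \in unitmx.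
  by rewrite unitmxE det_map_mx unitfE; apply: contra dC => /eqP /inj2 ->.
rewrite -[X in (X <= _)%N](mxrank_unit u2) /C map_mxsub -map_trmx map_mxsub -/A2.
rewrite rowsubE; apply: leq_trans (mxrankM_maxr _ _) _.
by rewrite mxrank_tr rowsubE; exact: mxrankM_maxr.
Qed.

Lemma trmxX (R : comNzRingType) n (A : 'M[R]_n) k : (A^T) ^+ k = (A ^+ k)^T.
Proof.
elim: k => [|k IH]; first by rewrite !expr0 trmx1.
by rewrite exprSr IH exprS -!mulmxE trmx_mul.
Qed.

Lemma map_mxXn (R : comNzRingType) n (A : 'M[int]_n) k :
  map_mx (fun z : int => z%:~R : R) (A ^+ k) = (map_mx (fun z : int => z%:~R : R) A) ^+ k.
Proof.
elim: k => [|k IH]; first by rewrite !expr0 map_mx1.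
by rewrite !exprS -!mulmxE map_mxM IH.
Qed.

Section Inst.
Variables (K : fieldType) (n : nat) (E : rel 'I_n.+1) (s : 'S_n.+1).
Hypothesis hs : (perm_mx s)^T *m skew_adj E *m perm_mx s = - skew_adj E.

Local Notation iK := (fun z : int => z%:~R : K).
Definition SK := map_mx iK (skew_adj E).
Definition TK := SK^T.
Definition GK : 'M[K]_n.+1 := perm_mx s.
Definition eK : 'rV[K]_n.+1 := const_mx 1.

Lemma skew_tr : (skew_adj E)^T = - skew_adj E.
Proof. by apply/matrixP => i j; rewrite !mxE opprB. Qed.

Lemma TK_tr : TK^T = - TK.
Proof. by rewrite /TK trmxK /SK map_trmx skew_tr map_mxN opprK. Qed.

Lemma GSG : GK^T *m SK *m GK = - SK.
Proof.
have hG : GK = map_mx iK (perm_mx s) by rewrite map_perm_mx.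
by rewrite hG /SK map_trmx -!map_mxM hs map_mxN.
Qed.

Lemma GGt : GK *m GK^T = 1%:M.
Proof. by rewrite /GK tr_perm_mx -perm_mxM mulgV perm_mx1. Qed.

Lemma TG : TK *m GK = - (GK *m TK).
Proof.
have hT : TK = - SK by rewrite /TK /SK map_trmx skew_tr map_mxN.
have h1 : SK *m GK = - (GK *m SK).
  by rewrite -[SK *m GK]mul1mx -GGt -!mulmxA (mulmxA _ SK) GSG mulmxN.
by rewrite hT mulNmx h1 mulmxN opprK.
Qed.

Lemma eG : eK *m GK = eK.
Proof.
rewrite /GK -[s]invgK -col_permE; apply/matrixP => i j.
by rewrite !mxE.
Qed.

Lemma walkK : (map_mx iK (walk_matrix E))^T = KR TK eK.
Proof.
have H : forall k, eK *m TK ^+ k = (map_mx iK (skew_adj E ^+ k *m const_mx 1))^T.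
  move=> k; rewrite /TK trmxX map_mxM map_mxXn map_const_mx rmorph1 trmx_mul.
  by congr (_ *m _); apply/matrixP => a b; rewrite !mxE.
apply/row_matrixP => k; rewrite rowK /kw H; apply/rowP => j.
by rewrite !mxE.
Qed.

End Inst.

Unset Implicit Arguments.
Set Strict Implicit.

Theorem theorem1p8 (n : nat) (E : rel 'I_n) (p : nat) :
  oriented_graph E ->
  self_converse E ->
  \det (walk_matrix E) != 0 ->
  prime p -> odd p ->
  \rank (mod_p p (walk_matrix E)) = n.-1 ->
  forall v : 'cV['F_p]_n,
    v != 0 ->
    (mod_p p (walk_matrix E))^T *m v = 0 ->
    v^T *m v != 0.
Proof.
move=> _ [s hs] hdet pp op hrank v v0 hv.
case: n E s hs hdet hrank v v0 hv => [|n] E s hs hdet hrank v v0 hv.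
  by rewrite [v]flatmx0 eqxx in v0.
have uq : KR (TK rat E) (eK rat n) \in unitmx.
  rewrite -walkK unitmx_tr unitmxE det_map_mx unitfE intr_eq0 //.
have [GGq hdpq hdmq] := unit_facts (TG rat hs) (eG rat s) uq.
have ss : (s * s)%g = 1%g.
  have h1 : perm_mx (s * s)%g = 1%:M :> 'M[rat]_n.+1 by rewrite perm_mxM.
  apply/permP => i; rewrite perm1.
  have := congr1 (fun M : 'M[rat]_n.+1 => M i ((s * s)%g i)) h1.
  rewrite /= !mxE eqxx.
  by case: eqP => // _ /eqP; rewrite oner_eq0.
have sV : (s^-1)%g = s by rewrite -[(s^-1)%g]mulg1 -ss mulKg.
have hp2 : (2%:R : 'F_p) != 0.
  rewrite -(dvdn_pcharf (pchar_Fp pp)); apply/negP => /(dvdn_leq (isT : 0 < 2)%N) h.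
  have := prime_gt1 pp; move: op h; lia.
have hGt : (GK 'F_p s)^T = GK 'F_p s by rewrite /GK tr_perm_mx sV.
have hGG : GK 'F_p s *m GK 'F_p s = 1%:M by rewrite /GK -perm_mxM ss perm_mx1.
have hR : \rank (KR (TK 'F_p E) (eK 'F_p n)) = n.
  by rewrite -walkK mxrank_tr; exact: hrank.
have inj2 : forall z : int, (z%:~R : rat) = 0 -> z = 0.
  by move=> z /eqP; rewrite intr_eq0 => /eqP.
have hG1 : forall (K : fieldType) (b : bool),
    (1%:M + (-1) ^+ b *: GK K s)%R = map_mx (fun z : int => z%:~R : K) (1%:M + (-1) ^+ b *: perm_mx s).
  move=> K b; rewrite map_mxD map_mx1 map_mxZ map_perm_mx /GK; congr (_ + _ *: _).
  by rewrite rmorph_sign.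
have hdp : (2 * \rank (1%:M + GK 'F_p s)%R <= n.+2)%N.
  apply: leq_trans hdpq; rewrite leq_mul2l /=.
  have := hG1 'F_p false; have := hG1 rat false; rewrite expr0 !scale1r => -> ->.
  exact: rank_int_le.
have hdm : (2 * \rank (1%:M - GK 'F_p s)%R <= n.+1)%N.
  apply: leq_trans hdmq; rewrite leq_mul2l /=.
  have := hG1 'F_p true; have := hG1 rat true; rewrite expr1 !scaleN1r => -> ->.
  exact: rank_int_le.
have vT0 : v^T != 0 by apply: contraNneq v0 => h; rewrite -[v]trmxK h trmx0.
have hvK : v^T *m (KR (TK 'F_p E) (eK 'F_p n))^T = 0.
  by rewrite -walkK trmxK -[v^T *m _]trmxK trmx_mul trmxK hv trmx0.
have := core hp2 (TK_tr _ _) hGt hGG (TG 'F_p hs) (eG 'F_p s) hR hdp hdm vT0 hvK.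
by rewrite trmxK.
Qed.
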